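(* For $\zeta^0,\zeta^1\in\mathbb C$ and $n\in\mathbb Z$, \[ \sum_{k=0}^{N-1}(\zeta^0)_k^{-1}\,\omega^{k(\zeta^1-n)}=\omega^n\,\omega^{(N-1)(\zeta^0+\zeta^1)}\sum_{k=0}^{N-1}(-\zeta^1+n)_k^{-1}\,\omega^{-k\zeta^0}. \]
   Context: $N\ge2$, $\omega=e^{2\pi i/N}$, $\omega^x=e^{2\pi ix/N}$. For $\zeta\in\mathbb C$ and $k\ge0$, $(\zeta)_k^{-1}=(1-\omega^{\zeta+1})(1-\omega^{\zeta+2})\cdots(1-\omega^{\zeta+k})$. *)

(* Defs.v *)
From Stdlib Require Import Reals.
From Coquelicot Require Import Coquelicot.
Open Scope R_scope.

Definition cexp (z : C) : C :=
  (exp (Re z) * cos (Im z), exp (Re z) * sin (Im z)).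

Definition omega_pow (N : nat) (x : C) : C :=
  cexp (Cmult (Cmult (RtoC (2 * PI)) Ci) (Cdiv x (RtoC (INR N)))).

(* (zeta)_k^{-1} = (1 - omega^{zeta+1}) ... (1 - omega^{zeta+k}) *)
Fixpoint poch_inv (N : nat) (z : C) (k : nat) : C :=
  match k with
  | O => RtoC 1
  | S k' => Cmult (poch_inv N z k')
                  (Cminus (RtoC 1) (omega_pow N (Cplus z (RtoC (INR (S k'))))))
  end.

Fixpoint csum (f : nat -> C) (n : nat) : C :=
  match n with
  | O => RtoC 0
  | S n' => Cplus (csum f n') (f n')
  end.

(* Main.v *)
Require Import Defs.
From Stdlib Require Import Reals ZArith.
From Coquelicot Require Import Coquelicot.
From HB Require Import structures.
From mathcomp Require Import all_boot all_order all_algebra.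
From mathcomp Require Import Rstruct.
From mathcomp Require Import ring zify.
From Stdlib Require Import Lra.
Ltac sring := let G := Get_goal in ring_lookup (PackRing Ring_gen) [] G.
Set Implicit Arguments. Unset Strict Implicit. Unset Printing Implicit Defensive.
Import Order.TTheory GRing.Theory Num.Theory.
Local Open Scope ring_scope.

Definition CC : Type := C.
HB.instance Definition _ := Choice.copy CC (R * R)%type.

Lemma CC_addA : associative (Cplus : CC -> CC -> CC).
Proof. by move=> x y z; rewrite Cplus_assoc. Qed.
Lemma CC_add0 : left_id (RtoC 0 : CC) Cplus.
Proof. by move=> x; rewrite Cplus_0_l. Qed.
Lemma CC_addN : left_inverse (RtoC 0 : CC) Copp Cplus.
Proof. by move=> x; rewrite Cplus_comm Cplus_opp_r. Qed.
HB.instance Definition _ := GRing.isZmodule.Build CC CC_addA Cplus_comm CC_add0 CC_addN.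
Lemma CC_mulA : associative (Cmult : CC -> CC -> CC).
Proof. by move=> x y z; rewrite Cmult_assoc. Qed.
Lemma CC_mul1 : left_id (RtoC 1 : CC) Cmult.
Proof. by move=> x; rewrite Cmult_1_l. Qed.
Lemma CC_mulD : left_distributive (Cmult : CC -> CC -> CC) Cplus.
Proof. by move=> x y z; rewrite Cmult_plus_distr_r. Qed.
Lemma CC_10 : (RtoC 1 : CC) != RtoC 0.
Proof. apply/eqP => H; case: H => /R1_neq_R0. done. Qed.
HB.instance Definition _ := GRing.Zmodule_isComNzRing.Build CC CC_mulA Cmult_comm CC_mul1 CC_mulD CC_10.
Definition CCinv (x : CC) : CC := Cinv x.
Lemma CC_mulV (x : CC) : x != 0 -> CCinv x * x = 1.
Proof. move=> /eqP H. apply: Cinv_l. exact: H. Qed.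
Lemma CC_inv0 : CCinv (0 : CC) = 0.
Proof. rewrite /CCinv /Cinv /=. apply: injective_projections => /=; rewrite /Rdiv; ring_simplify; try rewrite Rmult_0_l; auto; try ring. Qed.
HB.instance Definition _ := GRing.ComNzRing_isField.Build CC CC_mulV CC_inv0.


Section Core.
Variable K : fieldType.
Variable q : K.

Definition sc (p : {poly K}) := p \Po (q *: 'X).

Lemma coef_sc p i : (sc p)`_i = q ^+ i * p`_i.
Proof.
rewrite /sc; elim/poly_ind: p i => [|p c IH] i.
  by rewrite comp_poly0 !coef0 mulr0.
rewrite comp_poly_MXaddC -scalerAr coefD coefZ coefMX coefC coefD coefMX coefC.
case: i => [|i] /=; first by rewrite mulr0 add0r expr0 mul1r.
by rewrite IH addr0 addr0 mulrA -exprS.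
Qed.

Definition Lop (a : K) (p : {poly K}) := p * (1 - 'X) + (a * q) *: ('X * sc p).

Lemma Lop_uniq a D : Lop a D = 0 -> D = 0.
Proof.
move=> H.
have Hc i : (Lop a D)`_i = 0 by rewrite H coef0.
have Z : forall i, D`_i = 0.
  elim=> [|i IH].
    by have := Hc 0%N; rewrite /Lop coefD coefZ coefXM mulrBr mulr1 coefB coefMX /= subr0 mulr0 addr0.
  have := Hc i.+1; rewrite /Lop coefD coefZ coefXM mulrBr mulr1 coefB coefMX /= coef_sc IH.
  by rewrite !mulr0 subr0 addr0.
by apply/polyP => i; rewrite Z coef0.
Qed.

Lemma Lop_lin a p r : Lop a (p - r) = Lop a p - Lop a r.
Proof.
by rewrite /Lop /sc comp_polyB (mulrBr (polyX K)) mulrBl scalerBr opprD addrACA.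
Qed.


Lemma Lop_add a p r : Lop a (p + r) = Lop a p + Lop a r.
Proof. by rewrite /Lop /sc comp_polyD (mulrDr (polyX K)) mulrDl scalerDr addrACA. Qed.
Lemma Lop0 a : Lop a 0 = 0.
Proof. by rewrite /Lop /sc comp_poly0 mulr0 mul0r scaler0 addr0. Qed.
Lemma Lop_sum a I (r : seq I) (P : pred I) (F : I -> {poly K}) :
  Lop a (\sum_(i <- r | P i) F i) = \sum_(i <- r | P i) Lop a (F i).
Proof. exact: (big_morph _ (Lop_add a) (Lop0 a)). Qed.

Lemma Lop_mono a c k :
  Lop a (c *: ('X ^+ k)) = c *: ('X ^+ k) - (c * (1 - a * q ^+ k.+1)) *: ('X ^+ k.+1).
Proof.
rewrite /Lop /sc comp_polyZ comp_Xn_poly -!mul_polyC ?(rmorphM, rmorphB, rmorph1, rmorphXn) /= !exprS.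
rewrite exprMn; move: ('X^k : {poly K}) (q%:P ^+ k : {poly K}) => Xk Qk.
ring.
Qed.

Definition Pk a k := \prod_(1 <= j < k.+1) (1 - a * q ^+ j).

Lemma Pk_S a k : Pk a k.+1 = Pk a k * (1 - a * q ^+ k.+1).
Proof. by rewrite /Pk big_nat_recr. Qed.

Lemma Pk0 a : Pk a 0 = 1.
Proof. by rewrite /Pk big_geq. Qed.

Lemma LF a N : Lop a (\sum_(k < N) Pk a k *: ('X ^+ k)) = 1 - Pk a N *: ('X ^+ N).
Proof.
rewrite Lop_sum.
under eq_bigr => k _ do rewrite Lop_mono -Pk_S.
rewrite sumrB -(big_mkord xpredT (fun k => Pk a k *: ('X ^+ k))) -(big_mkord xpredT (fun k => Pk a k.+1 *: ('X ^+ k.+1))).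
rewrite -opprB -sumrB (telescope_sumr (fun k => Pk a k *: ('X ^+ k))) // opprB Pk0 scale1r expr0.
by [].
Qed.


Definition Rk k := \prod_(0 <= j < k) ('X - (q ^+ j)%:P).
Definition Qk k := \prod_(1 <= j < k.+1) ('X - (q ^+ j)%:P).

Lemma Rk_S k : Rk k.+1 = ('X - 1) * Qk k.
Proof. by rewrite /Rk big_ltn // expr0. Qed.

Lemma Rk_Sr k : Rk k.+1 = Rk k * ('X - (q ^+ k)%:P).
Proof. by rewrite /Rk big_nat_recr. Qed.

Lemma Qk_Sr k : Qk k.+1 = Qk k * ('X - (q ^+ k.+1)%:P).
Proof. by rewrite /Qk big_nat_recr. Qed.

Lemma sc_Qk k : sc (Qk k) = q ^+ k *: Rk k.
Proof.
elim: k => [|k IH].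
  by rewrite /sc /Qk /Rk !big_geq // -polyC1 comp_polyC expr0 scale1r.
rewrite Qk_Sr Rk_Sr /sc comp_polyM -/(sc (Qk k)) IH comp_polyB comp_polyX comp_polyC.
rewrite -!mul_polyC ?(rmorphM, rmorphB, rmorph1, rmorphXn) /= !exprS.
ring.
Qed.

Definition T a N k := a ^+ (N - k) *: ('X ^+ (N - k) * Rk k).

Lemma LH_term a N k : (k < N)%N -> q ^+ N = 1 ->
  Lop a (a ^+ (N.-1 - k) *: ('X ^+ (N.-1 - k) * Qk k)) = T a N k - T a N k.+1.
Proof.
move=> kN qN.
set m := (N.-1 - k)%N.
have E1 : (N - k = m.+1)%N by rewrite /m; lia.
have E2 : (N - k.+1 = m)%N by rewrite /m; lia.
have hq : q ^+ m * q ^+ k * q = 1.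
  by rewrite -exprD -exprSr; have -> : (m + k).+1 = N by rewrite /m; lia.
rewrite /T E1 E2 /Lop /sc comp_polyZ comp_polyM comp_Xn_poly -/(sc (Qk k)) sc_Qk (Rk_S k).
rewrite -!mul_polyC ?(rmorphM, rmorphB, rmorph1, rmorphXn) /= !exprS exprMn.
have hq' : (q%:P ^+ m * q%:P ^+ k * q%:P : {poly K}) = 1.
  by rewrite -!rmorphXn -!rmorphM /= hq.
apply/eqP; rewrite -subr_eq0; apply/eqP.
rewrite [RHS](_ : _ = (q%:P ^+ m * q%:P ^+ k * q%:P - 1) * (a%:P ^+ m * a%:P * 'X^m * 'X * Rk k)); last first.
  by rewrite hq' subrr mul0r.
clearbody m.
ring.
Qed.

Lemma LH a N : (0 < N)%N -> N.-primitive_root q ->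
  Lop a (\sum_(k < N) a ^+ (N.-1 - k) *: ('X ^+ (N.-1 - k) * Qk k))
  = 1 - (1 - a ^+ N) *: 'X^N.
Proof.
move=> N0 prim.
have qN : q ^+ N = 1 by apply: prim_expr_order.
rewrite Lop_sum.
rewrite (eq_bigr (fun k : 'I_N => T a N k - T a N k.+1)); last first.
  by move=> k _; apply: LH_term.
rewrite -(big_mkord xpredT (fun k => T a N k - T a N k.+1)).
rewrite sumrB -opprB -sumrB (telescope_sumr (T a N)) // opprB.
have R0 : Rk 0 = 1 by rewrite /Rk big_geq.
rewrite /T subn0 subnn expr0 scale1r mul1r R0 mulr1 /Rk (factor_Xn_sub_1 prim).
rewrite -!mul_polyC rmorphB rmorph1 rmorphXn /=.

rewrite rmorphXn /=.
ring.
Qed.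


Lemma PN a N : a != 0 -> (0 < N)%N -> N.-primitive_root q -> Pk a N = 1 - a ^+ N.
Proof.
move=> a0 N0 prim.
have qN : q ^+ N = 1 by apply: prim_expr_order.
have E : Pk a N = \prod_(0 <= j < N) (1 - a * q ^+ j).
  by rewrite /Pk big_nat_recr //= [RHS]big_ltn // expr0 qN mulrC.
rewrite E.
have H := congr1 (fun p : {poly K} => p.[a^-1]) (factor_Xn_sub_1 prim).
move: H; rewrite /= horner_prod hornerD hornerN hornerXn hornerC => H.
have F j : 1 - a * q ^+ j = a * ('X - (q ^+ j)%:P).[a^-1] by rewrite hornerXsubC mulrBr mulfV.
under eq_bigr => j _ do rewrite F.
by rewrite big_split /= H prodr_const_nat subn0 mulrBr mulr1 -exprMn mulfV // expr1n.
Qed.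

Lemma key a b N : a != 0 -> b != 0 -> (0 < N)%N -> N.-primitive_root q ->
  \sum_(k < N) Pk a k * b ^+ k = (a * b) ^+ N.-1 * \sum_(k < N) Pk b^-1 k * a ^- k.
Proof.
move=> a0 b0 N0 prim.
have EQ : \sum_(k < N) Pk a k *: ('X ^+ k) = \sum_(k < N) a ^+ (N.-1 - k) *: ('X ^+ (N.-1 - k) * Qk k).
  apply/eqP; rewrite -subr_eq0; apply/eqP; apply: (Lop_uniq (a := a)).
  by rewrite Lop_lin LF LH // PN // subrr.
have L1 : (\sum_(k < N) Pk a k *: ('X ^+ k)).[b] = \sum_(k < N) Pk a k * b ^+ k.
  by rewrite horner_sum; apply: eq_bigr => k _; rewrite hornerZ hornerXn.
have L2 : (\sum_(k < N) a ^+ (N.-1 - k) *: ('X ^+ (N.-1 - k) * Qk k)).[b]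
   = \sum_(k < N) a ^+ (N.-1 - k) * (b ^+ (N.-1 - k) * (Qk k).[b]).
  by rewrite horner_sum; apply: eq_bigr => k _; rewrite hornerZ hornerM hornerXn.
rewrite -L1 EQ L2.
rewrite mulr_sumr; apply: eq_bigr => k _.
have Qb : (Qk k).[b] = \prod_(1 <= j < k.+1) (b - q ^+ j).
  by rewrite /Qk horner_prod; apply: eq_bigr => j _; rewrite hornerXsubC.
have Pb : Pk b^-1 k = b ^- k * \prod_(1 <= j < k.+1) (b - q ^+ j).
  rewrite /Pk (_ : b ^- k = \prod_(1 <= j < k.+1) b^-1); last by rewrite prodr_const_nat subn1 /= exprVn.
  by rewrite -big_split /=; apply: eq_bigr => j _; rewrite mulrBr mulVf.
rewrite Qb Pb.
set m := (N.-1 - k)%N.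
have Ek : N.-1 = (m + k)%N by rewrite /m; have := ltn_ord k; lia.
rewrite Ek; clearbody m.
rewrite exprD; move: (\prod_(1 <= j < k.+1) (b - q ^+ j)) => X.
rewrite !exprMn.
field.
by rewrite !expf_neq0.
Qed.

End Core.


Lemma CmultE (x y : C) : Cmult x y = ((x : CC) * (y : CC)). Proof. by []. Qed.
Lemma CplusE (x y : C) : Cplus x y = ((x : CC) + (y : CC)). Proof. by []. Qed.
Lemma CoppE (x : C) : Copp x = - (x : CC). Proof. by []. Qed.
Lemma CminusE (x y : C) : Cminus x y = ((x : CC) - (y : CC)). Proof. by []. Qed.
Lemma CdivE (x y : C) : Cdiv x y = ((x : CC) / (y : CC)). Proof. by []. Qed.
Lemma RtoC1 : RtoC 1%R = (1 : CC). Proof. by []. Qed.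
Lemma RtoC0 : RtoC 0%R = (0 : CC). Proof. by []. Qed.

Lemma csumE (f : nat -> C) n : csum f n = \sum_(k < n) (f k : CC).
Proof. elim: n => [|n IH]; first by rewrite big_ord0. by rewrite big_ord_recr /= -IH. Qed.

Lemma cexp_add (x y : C) : cexp (Cplus x y) = Cmult (cexp x) (cexp y).
Proof.
case: x => a b; case: y => c d; rewrite /cexp /=.
rewrite exp_plus cos_plus sin_plus.
apply: injective_projections => /=; sring.
Qed.

Lemma cexp_addR (a b : CC) : cexp (@GRing.add CC a b) = @GRing.mul CC (cexp a) (cexp b).
Proof. exact: cexp_add. Qed.

Local Open Scope R_scope.
Lemma trig_aux (t : R) : 0 < t < 2 * PI -> cos t = 1 -> sin t = 0 -> False.
Proof.
move=> [t0 t2] Hc Hs.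
case: (Rtotal_order t PI) => [tp|[tp|tp]].
- by have := sin_gt_0 t t0 tp; lra.
- by move: Hc; rewrite tp cos_PI; lra.
- by have := sin_lt_0 t tp t2; lra.
Qed.

Lemma ratio_aux (j N : nat) : (0 < j)%N -> (j < N)%N -> 0 < 2 * PI * INR j / INR N < 2 * PI.
Proof.
move=> j0 jN.
have N0 : 0 < INR N by apply: lt_0_INR; apply/ssrnat.ltP; lia.
have h1 : 0 < INR j by apply: lt_0_INR; apply/ssrnat.ltP; lia.
have h2 : INR j < INR N by apply: lt_INR; apply/ssrnat.ltP.
have P0 := PI_RGT_0.
split.
  rewrite /Rdiv; apply: Rmult_lt_0_compat; last by apply: Rinv_0_lt_compat.
  by apply: Rmult_lt_0_compat => //; apply: Rmult_lt_0_compat; lra.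
apply: (Rmult_lt_reg_r (INR N)) => //; rewrite /Rdiv Rmult_assoc Rinv_l; last lra.
rewrite Rmult_1_r; apply: Rmult_lt_compat_l => //; lra.
Qed.
Local Open Scope ring_scope.

Section Omega.
Variable N : nat.
Hypothesis HN : (2 <= N)%N.

Let cst : CC := Cmult (RtoC (2 * PI)) Ci.
Local Notation om x := (omega_pow N x : CC).

Lemma omE (x : CC) : om x = cexp (@GRing.mul CC cst (@GRing.mul CC x (@GRing.inv CC (RtoC (INR N))))).
Proof. by []. Qed.

Lemma om_add (x y : CC) : om (@GRing.add CC x y) = om x * om y.
Proof. by rewrite !omE -cexp_addR -mulrDr -mulrDl. Qed.

Lemma om0 : om 0 = 1.
Proof.
rewrite omE mul0r mulr0 /cexp /=.
rewrite exp_0 cos_0 sin_0.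
apply: injective_projections => /=; sring.
Qed.

Lemma om_neq0 (x : CC) : om x != 0.
Proof.
apply/eqP => H.
have := om_add x (- x); rewrite subrr om0 H mul0r => /eqP.
by rewrite oner_eq0.
Qed.

Lemma om_opp (x : CC) : om (@GRing.opp CC x) = (om x)^-1.
Proof.
have := om_add x (- x); rewrite subrr om0 => H.
by apply: (mulfI (om_neq0 x)); rewrite -H mulfV // om_neq0.
Qed.

Lemma om_nat k (x : CC) : om (@GRing.mul CC (RtoC (INR k)) x) = (om x) ^+ k.
Proof.
elim: k => [|k IH]; first by rewrite /= RtoC0 mul0r om0 expr0.
rewrite S_INR RtoC_plus CplusE mulrDl. by rewrite RtoC1 mul1r om_add IH exprS mulrC.
Qed.

Local Open Scope R_scope.
Lemma om_real r : om (RtoC r) = ((cos (2 * PI * r / INR N), sin (2 * PI * r / INR N)) : CC).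
Proof.
have N0 : INR N <> 0%R.
  apply: not_0_INR; lia.
rewrite omE (_ : @GRing.mul CC (RtoC r) (@GRing.inv CC (RtoC (INR N))) = RtoC (r / INR N)); last by rewrite (RtoC_div r (INR N) N0).
rewrite /cst /cexp /=.
apply: injective_projections => /=; rewrite ?(Rmult_0_r, Rmult_0_l, Rminus_0_r, Rplus_0_r, Rmult_1_r, exp_0, Rmult_1_l, Rplus_0_l); rewrite /Rdiv !Rmult_assoc //.
Qed.

Local Open Scope ring_scope.
Definition qq : CC := omega_pow N (GRing.one CC).

Lemma qq_pow k : qq ^+ k = om (RtoC (INR k)).
Proof. by rewrite /qq -om_nat mulr1. Qed.

Lemma qqN : qq ^+ N = 1.
Proof.
rewrite qq_pow om_real.
have N0 : INR N <> 0%R by apply: not_0_INR; lia.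
by rewrite /Rdiv Rmult_assoc Rinv_r // Rmult_1_r cos_2PI sin_2PI.
Qed.

Lemma qq_prim : N.-primitive_root qq.
Proof.
apply/andP; split; first by lia.
apply/forallP => i; apply/eqP.
rewrite unity_rootE.
case: (boolP (i.+1 == N)) => [/eqP E|ne].
  by rewrite E qqN !eqxx.
apply/negbTE; rewrite qq_pow om_real; apply/eqP => [[Hc Hs]].
have lt : (i.+1 < N)%N by have := ltn_ord i; lia.
apply: (trig_aux (ratio_aux (j := i.+1) (N := N) _ _) Hc Hs); lia.
Qed.

End Omega.

Lemma poch_invE N z k : poch_inv N z k = Pk (qq N) (omega_pow N z) k.
Proof.
elim: k => [|k IH]; first by rewrite Pk0.
rewrite /= Pk_S -IH CmultE CminusE CplusE (om_add N) qq_pow.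
by [].
Qed.

Lemma omZ_N N (HN : (2 <= N)%N) (n : Z) : (omega_pow N (RtoC (IZR n)) : CC) ^+ N = 1.
Proof.
case: n => [|p|p].
- by rewrite /= RtoC0 om0 expr1n.
- rewrite -positive_nat_Z -INR_IZR_INZ -qq_pow -exprM mulnC exprM qqN //.
  by rewrite expr1n.
- rewrite IZR_NEG RtoC_opp CoppE om_opp // -positive_nat_Z -INR_IZR_INZ -qq_pow.
  by rewrite exprVn -exprM mulnC exprM qqN // expr1n invr1.
Qed.

Theorem lemmaA8 (N : nat) (HN : (2 <= N)%coq_nat) (z0 z1 : C) (n : Z) :
  csum (fun k => Cmult (poch_inv N z0 k)
                       (omega_pow N (Cmult (RtoC (INR k)) (Cminus z1 (RtoC (IZR n)))))) N
  = Cmult (Cmult (omega_pow N (RtoC (IZR n)))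
                 (omega_pow N (Cmult (RtoC (INR (N - 1)%coq_nat)) (Cplus z0 z1))))
          (csum (fun k => Cmult (poch_inv N (Cplus (Copp z1) (RtoC (IZR n))) k)
                                (omega_pow N (Copp (Cmult (RtoC (INR k)) z0)))) N).
Proof.
have HN' : (2 <= N)%N by apply/ssrnat.leP.
rewrite !csumE.
under eq_bigr => k _ do rewrite CmultE poch_invE CmultE om_nat.
rewrite [in RHS]CmultE.
rewrite [in RHS](eq_bigr (fun k : 'I_N => Pk (qq N) (omega_pow N (Cplus (Copp z1) (RtoC (IZR n)))) k * (omega_pow N z0 : CC) ^- k)); last first.
  by move=> k _; rewrite CmultE poch_invE CoppE CmultE (om_opp N) // om_nat.
have E1 : (omega_pow N (Cplus (Copp z1) (RtoC (IZR n))) : CC) = (omega_pow N (Cminus z1 (RtoC (IZR n))) : CC)^-1.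
  by rewrite -om_opp //; congr omega_pow; rewrite CplusE CoppE CminusE opprB addrC.
have E2 : (omega_pow N z1 : CC) = (omega_pow N (Cminus z1 (RtoC (IZR n))) : CC) * (omega_pow N (RtoC (IZR n)) : CC).
  by rewrite -om_add CminusE subrK.
have E3 : (omega_pow N (Cmult (RtoC (INR (N - 1)%coq_nat)) (Cplus z0 z1)) : CC) = ((omega_pow N z0 : CC) * ((omega_pow N (Cminus z1 (RtoC (IZR n))) : CC) * (omega_pow N (RtoC (IZR n)) : CC)))^+(N - 1)%coq_nat.
  by rewrite CmultE (om_nat N) CplusE (om_add N) E2.
rewrite E3 E1 (CmultE (omega_pow N (RtoC (IZR n)))).
have WN := omZ_N HN' n.
move: WN; set W := (omega_pow N (RtoC (IZR n)) : CC).
set A := (omega_pow N z0 : CC); set B := (omega_pow N (Cminus z1 (RtoC (IZR n))) : CC) => WN.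
have A0 : A != 0 by apply: om_neq0.
have B0 : B != 0 by apply: om_neq0.
have N0 : (0 < N)%N by lia.
rewrite (key A0 B0 N0 (qq_prim HN')).
have -> : (N - 1)%coq_nat = N.-1 by lia.
have -> : W * (A * (B * W)) ^+ N.-1 = (A * B) ^+ N.-1.
  rewrite mulrA exprMn mulrC -mulrA -exprSr.
  rewrite (_ : (N.-1).+1 = N); last by lia.
  by rewrite WN mulr1.
by [].
Qed.
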